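(* Let $(X,Y,Z)$ be a random element whose sample space is partially ordered (with the product order on pairs). If $X\uparrow^{\mathrm{st}}Y$ and $Z$ is independent of $(X,Y)$, then $(X,Z)\uparrow^{\mathrm{st}}Y$ and $(X,Z)\uparrow^{\mathrm{st}}(Y,Z)$.
   Context: For random elements $A,B$ on partially ordered spaces, $A\uparrow^{\mathrm{st}}B$ ($A$ is stochastically increasing in $B$) means that the regular conditional probability $\Pr(A\in\cdot\mid B=b)$ exists and, for every bounded non-decreasing function $h$ of $A$, the map $b\mapsto\mathbb E[h(A)\mid B=b]$ is non-decreasing (i.e. $b\preceq b'$ implies $\mathbb E[h(A)\mid B=b]\le\mathbb E[h(A)\mid B=b']$). *)

(* Defs.v *)
From HB Require Import structures.
From mathcomp Require Import all_boot all_order all_algebra.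
From mathcomp Require Import all_classical all_reals all_analysis.
Set Implicit Arguments. Unset Strict Implicit. Unset Printing Implicit Defensive.
Import Order.TTheory GRing.Theory Num.Theory.
Local Open Scope classical_set_scope.
Local Open Scope ring_scope.

Definition is_partial_order (A : Type) (le : A -> A -> Prop) : Prop :=
  [/\ (forall x, le x x),
      (forall x y, le x y -> le y x -> x = y) &
      (forall x y z, le x y -> le y z -> le x z)].

Definition prod_le (A B : Type) (leA : A -> A -> Prop) (leB : B -> B -> Prop)
  : A * B -> A * B -> Prop :=
  fun p q => leA p.1 q.1 /\ leB p.2 q.2.

Definition indep_re (R : realType) (d : measure_display) (Omega : measurableType d)
  (P : probability Omega R)
  (d1 : measure_display) (S1 : measurableType d1)
  (d2 : measure_display) (S2 : measurableType d2)
  (U : Omega -> S1) (V : Omega -> S2) : Prop :=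
  forall (A : set S1) (B : set S2), measurable A -> measurable B ->
    P (U @^-1` A `&` V @^-1` B) = (P (U @^-1` A) * P (V @^-1` B))%E.

Definition is_rcd (R : realType) (d : measure_display) (Omega : measurableType d)
  (P : probability Omega R)
  (dA : measure_display) (SA : measurableType dA)
  (dB : measure_display) (SB : measurableType dB)
  (A : Omega -> SA) (B : Omega -> SB) (k : R.-pker SB ~> SA) : Prop :=
  forall (C : set SA) (D : set SB), measurable C -> measurable D ->
    (P (A @^-1` C `&` B @^-1` D) = \int[P]_(w in B @^-1` D) k (B w) C)%E.

Definition stoch_incr (R : realType) (d : measure_display) (Omega : measurableType d)
  (P : probability Omega R)
  (dA : measure_display) (SA : measurableType dA)
  (dB : measure_display) (SB : measurableType dB)
  (leA : SA -> SA -> Prop) (leB : SB -> SB -> Prop)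
  (A : Omega -> SA) (B : Omega -> SB) : Prop :=
  exists k : R.-pker SB ~> SA, is_rcd P A B k /\
    forall h : SA -> R, measurable_fun setT h ->
      (exists M : R, forall x, `|h x| <= M) ->
      (forall x y, leA x y -> h x <= h y) ->
      forall b b', leB b b' ->
        (\int[k b]_x (h x)%:E <= \int[k b']_x (h x)%:E)%E.

(* Main.v *)
Require Import Defs.
From HB Require Import structures.
From mathcomp Require Import all_boot all_order all_algebra.
From mathcomp Require Import all_classical all_reals all_analysis.
Import Order.TTheory GRing.Theory Num.Theory.
Local Open Scope classical_set_scope.
Local Open Scope ring_scope.
From mathcomp Require Import measurable_realfun.
Import numFieldTopology.Exports.
Set Implicit Arguments. Unset Strict Implicit. Unset Printing Implicit Defensive.
Local Open Scope ereal_scope.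
Section kpre.
Context d0 d1 d2 (T0 : measurableType d0) (T1 : measurableType d1)
  (T2 : measurableType d2) (R : realType).
Variables (k : R.-pker T1 ~> T2) (g : T0 -> T1).
Definition kpre (mg : measurable_fun setT g) : T0 -> {measure set T2 -> \bar R} :=
  fun t => k (g t).
Hypothesis mg : measurable_fun setT g.
Let mkpre U : measurable U -> measurable_fun setT (kpre mg ^~ U).
Proof. by move=> mU; exact: (measurableT_comp (measurable_kernel k U mU) mg). Qed.
HB.instance Definition _ := isKernel.Build _ _ _ _ _ (kpre mg) mkpre.
Let kpre1 t : kpre mg t setT = 1.
Proof. by rewrite /kpre prob_kernel. Qed.
HB.instance Definition _ := Kernel_isProbability.Build _ _ _ _ _ (kpre mg) kpre1.
End kpre.

Section kcst.
Context d0 d2 (T0 : measurableType d0) (T2 : measurableType d2) (R : realType).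
Variable mu : probability T2 R.
Definition kcst : T0 -> {measure set T2 -> \bar R} := fun _ => mu.
Let mkcst U : measurable U -> measurable_fun setT (kcst ^~ U).
Proof. by move=> mU; exact: measurable_cst. Qed.
HB.instance Definition _ := isKernel.Build _ _ _ _ _ kcst mkcst.
Let kcst1 t : kcst t setT = 1.
Proof. by rewrite /kcst; exact: probability_setT. Qed.
HB.instance Definition _ := Kernel_isProbability.Build _ _ _ _ _ kcst kcst1.
End kcst.

Section Kp.
Context d0 d1 d2 (T0 : measurableType d0) (T1 : measurableType d1)
  (T2 : measurableType d2) (R : realType).
Variables (k1 : R.-pker T0 ~> T1) (k2 : R.-pker (T0 * T1) ~> T2).
Definition Kp : T0 -> {measure set (T1 * T2) -> \bar R} := mkproduct k1 k2.
HB.instance Definition _ := isKernel.Build _ _ _ _ _ Kp (measurable_kproduct k1 k2).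

Lemma KpE t A : measurable A -> Kp t A = \int[k1 t]_x k2 (t, x) (xsection A x).
Proof.
move=> mA; rewrite /Kp /mkproduct /= /kproduct; apply: eq_integral => x _.
rewrite /kernel.intker_indic /= integral_indic//; first by rewrite setIT xsectionE.
by rewrite -[X in measurable X]xsectionE; exact: measurable_xsection.
Qed.

Let Kp1 t : Kp t setT = 1.
Proof.
rewrite KpE// (eq_integral (fun=> 1)); last first.
  move=> x _; rewrite (_ : xsection _ _ = setT) ?prob_kernel//.
  by apply/seteqP; split => y _ //; rewrite /xsection/= in_setT.
by rewrite integral_cst// mul1e prob_kernel.
Qed.
HB.instance Definition _ := Kernel_isProbability.Build _ _ _ _ _ Kp Kp1.

Lemma KpX t A1 A2 : measurable A1 -> measurable A2 ->
  Kp t (A1 `*` A2) = \int[k1 t]_x ((\1_A1 x)%:E * k2 (t, x) A2).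
Proof.
move=> m1 m2; rewrite KpE; last exact: measurableX.
apply: eq_integral => x _; rewrite indicE.
have [xA|xA] := boolP (x \in A1).
  by rewrite mul1e in_xsectionX.
by rewrite mul0e notin_xsectionX// measure0.
Qed.
End Kp.
Section mint.
Context d dT (Om : measurableType d) (T : measurableType dT) (R : realType).
Variables (mu : {measure set Om -> \bar R}) (E : set Om)
  (F : Om -> {measure set T -> \bar R}).
Definition mint (mE : measurable E)
  (mF : forall C, measurable C -> measurable_fun E (fun w => F w C)) :
  set T -> \bar R := fun C => \int[mu]_(w in E) F w C.
Hypotheses (mE : measurable E)
  (mF : forall C, measurable C -> measurable_fun E (fun w => F w C)).
Let mint0 : mint mE mF set0 = 0.
Proof. by apply: integral0_eq => w _; rewrite measure0. Qed.
Let mint_ge0 C : 0 <= mint mE mF C.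
Proof. exact: integral_ge0. Qed.
Let mint_sa : semi_sigma_additive (mint mE mF).
Proof.
move=> U mU tU mUU; rewrite /mint [X in _ --> X](_ : _ =
  \int[mu]_(w in E) (\sum_(n <oo) F w (U n))); last first.
  apply: eq_integral => w _.
  by apply/esym/cvg_lim => //; exact/measure_semi_sigma_additive.
apply/cvg_closeP; split.
  by apply: is_cvg_nneseries => n _ _; exact: integral_ge0.
rewrite closeE// integral_nneseries// => n.
exact: mF.
Qed.
HB.instance Definition _ := isMeasure.Build _ _ R (mint mE mF) mint0 mint_ge0 mint_sa.
End mint.

Section dens.
Context d dT (Om : measurableType d) (T : measurableType dT) (R : realType).
Variables (mu : {measure set Om -> \bar R}) (V : Om -> T) (f : Om -> \bar R).
Definition dens (mV : measurable_fun setT V) (mf : measurable_fun setT f)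
  (f0 : forall w, 0 <= f w) : set T -> \bar R :=
  fun D => \int[mu]_(w in V @^-1` D) f w.
Hypotheses (mV : measurable_fun setT V) (mf : measurable_fun setT f)
  (f0 : forall w, 0 <= f w).
Let mVD D : measurable D -> measurable (V @^-1` D).
Proof. by move=> mD; rewrite -[X in measurable X]setTI; exact: mV. Qed.
Let dens0 : dens mV mf f0 set0 = 0.
Proof. by rewrite /dens preimage_set0 integral_set0. Qed.
Let dens_ge0 C : 0 <= dens mV mf f0 C.
Proof. by apply: integral_ge0 => w _. Qed.
Let dens_sa : semi_sigma_additive (dens mV mf f0).
Proof.
move=> U mU tU mUU; rewrite /dens preimage_bigcup ge0_integral_bigcup//.
- by apply: is_cvg_nneseries => n _ _; exact: integral_ge0.
- by move=> n; exact: mVD.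
- exact: measurable_funTS.
- apply/trivIsetP => i j _ _ ij; rewrite -preimage_setI.
  by move/trivIsetP : tU => /(_ _ _ _ _ ij) ->//; rewrite preimage_set0.
Qed.
HB.instance Definition _ := isMeasure.Build _ _ R (dens mV mf f0) dens0 dens_ge0 dens_sa.
End dens.

Lemma uniq_prod (R : realType) d1 d2 (T1 : measurableType d1) (T2 : measurableType d2)
  (m1 m2 : {measure set (T1 * T2) -> \bar R}) :
  (forall A B, measurable A -> measurable B -> m1 (A `*` B) = m2 (A `*` B)) ->
  m1 setT < +oo -> forall C, measurable C -> m1 C = m2 C.
Proof.
move=> hAB m1fin C mC.
apply: (@measure_unique _ R _ [set A `*` B | A in measurable & B in measurable]
  (fun _ => setT)) => //.
- exact: measurable_prod_measurableType.
- move=> X Y [X1 mX1 [X2 mX2 <-{X}]] [Y1 mY1 [Y2 mY2 <-{Y}]].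
  exists (X1 `&` Y1); first exact: measurableI.
  by exists (X2 `&` Y2); [exact: measurableI|rewrite setXI].
- by move=> _; exists setT => //; exists setT => //; rewrite setXTT.
- by rewrite bigcup_const.
- by move=> _ [A mA [B mB <-]]; exact: hAB.
Qed.
Section pr.
Context d (T : measurableType d) (R : realType) (mu : {measure set T -> \bar R}).
Definition pr (H : mu setT = 1) : set T -> \bar R := fun A => mu A.
Variable H : mu setT = 1.
Let pr0 : pr H set0 = 0. Proof. exact: measure0. Qed.
Let pr_ge0 A : 0 <= pr H A. Proof. exact: measure_ge0. Qed.
Let pr_sa : semi_sigma_additive (pr H). Proof. exact: measure_semi_sigma_additive. Qed.
HB.instance Definition _ := isMeasure.Build _ _ _ (pr H) pr0 pr_ge0 pr_sa.
HB.instance Definition _ := Measure_isProbability.Build _ _ _ (pr H) H.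
End pr.
Arguments pr {d T R mu}.
Lemma Kp_int d0 d1 d2 (T0 : measurableType d0) (T1 : measurableType d1)
  (T2 : measurableType d2) (R : realType)
  (k1 : R.-pker T0 ~> T1) (k2 : R.-pker (T0 * T1) ~> T2)
  t (m : probability T2 R)
  (hk2 : forall x A, measurable A -> k2 (t, x) A = m A)
  (h : T1 * T2 -> R) (mh : measurable_fun setT h) (M : R)
  (hM : forall p, (`|h p| <= M)%R) :
  \int[Kp k1 k2 t]_p (h p)%:E = \int[k1 t]_x \int[m]_z (h (x, z))%:E.
Proof.
pose P1 := pr (@prob_kernel _ _ _ _ _ k1 t).
have E A : measurable A -> Kp k1 k2 t A = (P1 \x m) A.
  move=> mA; rewrite KpE// /product_measure1 /=; apply: eq_integral => x _.
  by apply: hk2; exact: measurable_xsection.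
rewrite (eq_measure_integral (P1 \x m)); last by move=> A mA _; exact: E.
have Hint : (P1 \x m).-integrable setT (EFin \o h).
  apply: measurable_bounded_integrable => //.
  - by apply: (le_lt_trans (probability_le1 (P1 \x m) measurableT)); exact: ltry.
  - rewrite /bounded_near; exists M; split; first exact: num_real.
    by move=> r Mr p _; exact: le_trans (hM p) (ltW Mr).
by rewrite -(integral12_prod_meas1 Hint).
Qed.
Section pf.
Context d1 d2 (T1 : measurableType d1) (T2 : measurableType d2) (R : realType).
Variables (mu : {measure set T1 -> \bar R}) (f : T1 -> T2).
Definition pf (mf : measurable_fun setT f) : set T2 -> \bar R := pushforward mu f.
Variable mf : measurable_fun setT f.
Let pf0 : pf mf set0 = 0.
Proof. by rewrite /pf /pushforward preimage_set0 measure0. Qed.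
Let pf_ge0 A : 0 <= pf mf A.
Proof. by rewrite /pf /pushforward; exact: measure_ge0. Qed.
Let pf_sa : semi_sigma_additive (pf mf).
Proof.
move=> F mF tF mUF; rewrite /pf /pushforward preimage_bigcup.
apply: measure_semi_sigma_additive.
- by move=> n; rewrite -[X in measurable X]setTI; exact: mf.
- apply/trivIsetP => /= i j _ _ ij; rewrite -preimage_setI.
  by move/trivIsetP : tF => /(_ _ _ _ _ ij) ->//; rewrite preimage_set0.
- by rewrite -preimage_bigcup -[X in measurable X]setTI; exact: mf.
Qed.
HB.instance Definition _ := isMeasure.Build _ _ _ (pf mf) pf0 pf_ge0 pf_sa.
End pf.

Lemma integral_mrestr d (T : measurableType d) (R : realType)
  (mu : {measure set T -> \bar R}) (E : set T) (mE : measurable E)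
  (D : set T) (mD : measurable D) (g : T -> \bar R)
  (mg : measurable_fun D g) (g0 : forall x, D x -> 0 <= g x) :
  \int[mrestr mu mE]_(x in D) g x = \int[mu]_(x in D `&` E) g x.
Proof.
rewrite (@ge0_negligible_integral _ _ _ _ D (~` E))//; first last.
- by rewrite /= /mrestr setICl measure0.
- exact: measurableC.
rewrite setDE setCK; apply: eq_measure_integral => A mA AD.
by rewrite /= /mrestr setIidl//; apply: subset_trans AD _; exact: subIsetr.
Qed.

Lemma IL (R : realType) d (Om : measurableType d) (P : probability Om R)
  dY (SY : measurableType dY) dZ (SZ : measurableType dZ)
  (Y : Om -> SY) (Z : Om -> SZ) (mY : measurable_fun setT Y)
  (mZ : measurable_fun setT Z) (B : set SZ) (mB : measurable B)
  (hind : forall A, measurable A ->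
     P (Y @^-1` A `&` Z @^-1` B) = P (Z @^-1` B) * P (Y @^-1` A))
  (f : SY -> \bar R) (mf : measurable_fun setT f) (f0 : forall y, 0 <= f y)
  (A : set SY) (mA : measurable A) :
  \int[P]_(w in Y @^-1` A `&` Z @^-1` B) f (Y w) =
  P (Z @^-1` B) * \int[P]_(w in Y @^-1` A) f (Y w).
Proof.
have mE : measurable (Z @^-1` B).
  by rewrite -[X in measurable X]setTI; exact: mZ.
have mYA : measurable (Y @^-1` A).
  by rewrite -[X in measurable X]setTI; exact: mY.
have mfY : measurable_fun setT (f \o Y) by exact: measurableT_comp.
have -> : \int[P]_(w in Y @^-1` A `&` Z @^-1` B) f (Y w) =
    \int[mrestr P mE]_(w in Y @^-1` A) (f \o Y) w.
  by rewrite integral_mrestr//; [exact: measurable_funTS | move=> x _; exact: f0].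
rewrite -(ge0_integral_pushforward mY (mrestr P mE) mA); last 2 first.
  exact: measurable_funTS.
  by move=> y _.
have c0 : (0 <= fine (P (Z @^-1` B)))%R by apply: fine_ge0.
pose c : {nonneg R} := NngNum c0.
have cE : (c%:num)%:E = P (Z @^-1` B).
  by rewrite /= fineK// fin_num_measure.
rewrite (eq_measure_integral (mscale c (pf P mY))); last first.
  move=> A' mA' _.
  by rewrite /= /mscale /pf /pushforward /mrestr /= cE hind.
rewrite ge0_integral_mscale//; last exact: measurable_funTS.
by rewrite cE /pf ge0_integral_pushforward//; exact: measurable_funTS.
Qed.
Lemma rcd_from_rect (R : realType) d (Om : measurableType d) (P : probability Om R)
  d1 d2 (T1 : measurableType d1) (T2 : measurableType d2)
  (W : Om -> T1 * T2) (mW : measurable_fun setT W)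
  (E : set Om) (mE : measurable E) (F : Om -> {measure set (T1 * T2) -> \bar R})
  (mF : forall C, measurable C -> measurable_fun E (fun w => F w C))
  (hrect : forall A B, measurable A -> measurable B ->
     P (W @^-1` (A `*` B) `&` E) = \int[P]_(w in E) F w (A `*` B)) :
  forall C, measurable C -> P (W @^-1` C `&` E) = \int[P]_(w in E) F w C.
Proof.
pose Fd (w : Om) : {measure set (T1 * T2) -> \bar R} := \d_(W w).
have mD C : measurable C -> measurable_fun E (fun w => Fd w C).
  move=> mC; rewrite (_ : (fun w => _) = EFin \o (\1_C \o W)); last first.
    by apply/funext => w; rewrite /Fd /= diracE.
  by apply/measurable_funTS/measurable_EFinP; apply: measurableT_comp => //.
have mWC C : measurable C -> measurable (W @^-1` C).
  by move=> mC; rewrite -[X in measurable X]setTI; exact: mW.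
have L1 C : measurable C -> mint P mE mD C = P (W @^-1` C `&` E).
  by move=> mC; rewrite /mint -integral_indic//; last exact: mWC.
move=> C mC; rewrite -L1//.
apply: (uniq_prod (m1 := mint P mE mD) (m2 := mint P mE mF)) => //.
- move=> A B mA mB; rewrite /= L1; last exact: measurableX.
  exact: hrect.
- rewrite /= L1//; apply: (le_lt_trans (probability_le1 P _)); last exact: ltry.
  by apply: measurableI => //; exact: mWC.
Qed.

Lemma rcd_from_rectD (R : realType) d (Om : measurableType d) (P : probability Om R)
  d1 d2 (T1 : measurableType d1) (T2 : measurableType d2)
  (V : Om -> T1 * T2) (mV : measurable_fun setT V)
  (S : set Om) (mS : measurable S)
  (G : T1 * T2 -> \bar R) (mG : measurable_fun setT G) (G0 : forall p, 0 <= G p)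
  (hrect : forall A B, measurable A -> measurable B ->
     P (S `&` V @^-1` (A `*` B)) = \int[P]_(w in V @^-1` (A `*` B)) G (V w)) :
  forall D, measurable D -> P (S `&` V @^-1` D) = \int[P]_(w in V @^-1` D) G (V w).
Proof.
have mVD D : measurable D -> measurable (V @^-1` D).
  by move=> mD; rewrite -[X in measurable X]setTI; exact: mV.
have mI : measurable_fun setT (fun w => (\1_S w : R)%:E).
  by apply/measurable_EFinP; exact: measurable_indic.
have I0 w : 0 <= (\1_S w : R)%:E by rewrite lee_fin.
have mGV : measurable_fun setT (G \o V) by exact: measurableT_comp.
have GV0 w : 0 <= (G \o V) w by exact: G0.
have L1 D : measurable D -> dens P mV mI I0 D = P (S `&` V @^-1` D).
  by move=> mD; rewrite /dens integral_indic//; exact: mVD.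
move=> D mD; rewrite -L1//.
apply: (uniq_prod (m1 := dens P mV mI I0) (m2 := dens P mV mGV GV0)) => //.
- move=> A B mA mB; rewrite /= L1; last exact: measurableX.
  exact: hrect.
- rewrite /= L1//; apply: (le_lt_trans (probability_le1 P _)); last exact: ltry.
  by apply: measurableI => //; exact: mVD.
Qed.
Lemma KpXc d0 d1 d2 (T0 : measurableType d0) (T1 : measurableType d1)
  (T2 : measurableType d2) (R : realType)
  (k1 : R.-pker T0 ~> T1) (k2 : R.-pker (T0 * T1) ~> T2) t A1 A2 (c : \bar R) :
  measurable A1 -> measurable A2 -> 0 <= c ->
  (forall x, k2 (t, x) A2 = c) -> Kp k1 k2 t (A1 `*` A2) = k1 t A1 * c.
Proof.
move=> mA1 mA2 c0 hc; rewrite KpX//.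
under eq_integral do rewrite hc.
rewrite ge0_integralZr//; first by rewrite integral_indic// setIT.
by apply/measurable_EFinP; exact: measurable_indic.
Qed.

Lemma bint (R : realType) d (T : measurableType d) (mu : probability T R)
  (f : T -> R) (mf : measurable_fun setT f) (M : R)
  (hM : forall x, (`|f x| <= M)%R) : mu.-integrable setT (EFin \o f).
Proof.
apply: measurable_bounded_integrable => //.
- by apply: (le_lt_trans (probability_le1 mu measurableT)); exact: ltry.
- rewrite /bounded_near; exists M; split; first exact: num_real.
  by move=> r Mr p _; exact: le_trans (hM p) (ltW Mr).
Qed.

Lemma int_bound (R : realType) d (T : measurableType d) (mu : probability T R)
  (f : T -> R) (mf : measurable_fun setT f) (M : R)
  (hM : forall x, (`|f x| <= M)%R) :
  \int[mu]_x (f x)%:E = (fine (\int[mu]_x (f x)%:E))%:E /\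
  (`|fine (\int[mu]_x (f x)%:E)| <= M)%R.
Proof.
have If := bint mu mf hM.
have fin : \int[mu]_x (f x)%:E \is a fin_num by exact: integrable_fin_num.
split; first by rewrite fineK.
have M0 : (0 <= M)%R.
  case: (pselect (exists x : T, True)) => [[x _]|nx].
    exact: le_trans (normr_ge0 _) (hM x).
  exfalso; have := probability_setT mu.
  rewrite (_ : [set: T] = set0) ?measure0//; last first.
    by apply/seteqP; split => // x _; apply: nx; exists x.
  by move=> /eqP; rewrite eq_sym onee_eq0.
have cM : mu.-integrable setT (EFin \o (fun=> M)).
  by apply: (bint mu (measurable_cst _) (M := M)) => x; rewrite ger0_norm.
have cNM : mu.-integrable setT (EFin \o (fun=> (- M)%R)).
  by apply: (bint mu (measurable_cst _) (M := M)) => x; rewrite normrN ger0_norm.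
have ic (r : R) : \int[mu]_x (EFin \o (fun=> r)) x = r%:E.
  rewrite (_ : EFin \o _ = cst r%:E)// integral_cst//.
  by rewrite -[RHS]mule1; congr (_ * _); exact: probability_setT.
have up : \int[mu]_x (f x)%:E <= M%:E.
  apply: (le_trans (le_integral _ If cM _)) => //.
    by move=> x _; rewrite /= lee_fin; exact: le_trans (ler_norm _) (hM x).
  by rewrite ic.
have lo : (- M)%:E <= \int[mu]_x (f x)%:E.
  apply: le_trans (le_integral _ cNM If _) => //.
    by rewrite ic.
  by move=> x _; rewrite /= lee_fin; have := hM x; rewrite ler_norml => /andP[].
have up' : (fine (\int[mu]_x (f x)%:E) <= M)%R by rewrite -lee_fin fineK.
have lo' : (- M <= fine (\int[mu]_x (f x)%:E))%R by rewrite -lee_fin fineK.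
by rewrite ler_norml lo' up'.
Qed.
Lemma part1 (R : realType) (d : measure_display) (Omega : measurableType d)
  (P : probability Omega R)
  (dX : measure_display) (SX : measurableType dX)
  (dY : measure_display) (SY : measurableType dY)
  (dZ : measure_display) (SZ : measurableType dZ)
  (leX : SX -> SX -> Prop) (leY : SY -> SY -> Prop) (leZ : SZ -> SZ -> Prop)
  (reflZ : forall z, leZ z z)
  (X : Omega -> SX) (Y : Omega -> SY) (Z : Omega -> SZ)
  (mX : measurable_fun setT X) (mY : measurable_fun setT Y)
  (mZ : measurable_fun setT Z)
  (k : R.-pker SY ~> SX) (hk : is_rcd P X Y k)
  (hmono : forall h : SX -> R, measurable_fun setT h ->
      (exists M : R, forall x, (`|h x| <= M)%R) ->
      (forall x y, leX x y -> (h x <= h y)%R) ->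
      forall b b', leY b b' ->
        \int[k b]_x (h x)%:E <= \int[k b']_x (h x)%:E)
  (hind : indep_re P Z (fun w => (X w, Y w))) :
  stoch_incr P (prod_le leX leZ) leY (fun w => (X w, Z w)) Y.
Proof.
have HZ : pf P mZ setT = 1.
  by rewrite /pf /pushforward preimage_setT; exact: probability_setT.
pose PZ := pr HZ.
pose K1 := Kp k (@kcst _ _ (SY * SX)%type _ _ PZ).
have K1X y A B : measurable A -> measurable B -> K1 y (A `*` B) = k y A * PZ B.
  by move=> mA mB; apply: KpXc => //; rewrite /PZ; exact: measure_ge0.
exists K1; split.
- move=> C D mC mD.
  have mYD : measurable (Y @^-1` D).
    by rewrite -[X in measurable X]setTI; exact: mY.
  have mXZ : measurable_fun setT (fun w => (X w, Z w)).
    by apply/measurable_fun_pairP; split.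
  apply: (rcd_from_rect mXZ mYD (F := fun w => K1 (Y w))) => //.
  + move=> C' mC'; apply: measurable_funTS.
    exact: measurableT_comp (measurable_kernel K1 C' mC') mY.
  + move=> A B mA mB.
    have mkA : measurable_fun (Y @^-1` D) (fun w => k (Y w) A).
      apply: measurable_funTS.
      exact: measurableT_comp (measurable_kernel k A mA) mY.
    under eq_integral => w _ do rewrite K1X//.
    rewrite ge0_integralZr//.
    rewrite -hk//.
    have -> : (fun w => (X w, Z w)) @^-1` (A `*` B) `&` Y @^-1` D =
        Z @^-1` B `&` (fun w => (X w, Y w)) @^-1` (A `*` D).
      by apply/seteqP; split => w /=; tauto.
    by rewrite (hind _ _ mB (measurableX mA mD)) muleC.
- move=> h mh [M hM] hmon b b' hbb.
  have Ek (y : SY) : \int[K1 y]_p (h p)%:E = \int[k y]_x \int[PZ]_z (h (x, z))%:E.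
    by apply: (Kp_int k (m := PZ) _ mh hM) => x A mA.
  rewrite !Ek.
  have mhx x : measurable_fun setT (fun z => h (x, z)).
    exact: measurable_fun_pair2.
  have hMx x z : (`|h (x, z)| <= M)%R by exact: hM.
  pose phi x := fine (\int[PZ]_z (h (x, z))%:E).
  have Ephi x : \int[PZ]_z (h (x, z))%:E = (phi x)%:E.
    exact: (int_bound PZ (mhx x) (hMx x)).1.
  under eq_integral do rewrite Ephi.
  under [X in _ <= X]eq_integral do rewrite Ephi.
  apply: hmono => //.
  + pose P1 := pr (@prob_kernel _ _ _ _ _ k b).
    have Hint : (P1 \x PZ).-integrable setT (EFin \o h) by exact: (bint _ mh hM).
    exact: (measurableT_comp (fine_measurable measurableT) (measurable_fubini_F Hint)).
  + by exists M => x; exact: (int_bound PZ (mhx x) (hMx x)).2.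
  + move=> x x' hxx; rewrite /phi; apply: fine_le.
    * exact: integrable_fin_num (bint PZ (mhx x) (hMx x)).
    * exact: integrable_fin_num (bint PZ (mhx x') (hMx x')).
    apply: le_integral => //; [exact: (bint PZ (mhx x) (hMx x))|exact: (bint PZ (mhx x') (hMx x'))|].
    by move=> z _; rewrite lee_fin; apply: hmon; split.
Qed.
Lemma mpre d (Om : measurableType d) d' (T : measurableType d') (f : Om -> T)
  (A : set T) : measurable_fun setT f -> measurable A -> measurable (f @^-1` A).
Proof. by move=> mf mA; rewrite -[X in measurable X]setTI; exact: mf. Qed.

Lemma part2 (R : realType) (d : measure_display) (Omega : measurableType d)
  (P : probability Omega R)
  (dX : measure_display) (SX : measurableType dX)
  (dY : measure_display) (SY : measurableType dY)
  (dZ : measure_display) (SZ : measurableType dZ)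
  (leX : SX -> SX -> Prop) (leY : SY -> SY -> Prop) (leZ : SZ -> SZ -> Prop)
  (reflX : forall x, leX x x) (reflZ : forall z, leZ z z)
  (X : Omega -> SX) (Y : Omega -> SY) (Z : Omega -> SZ)
  (mX : measurable_fun setT X) (mY : measurable_fun setT Y)
  (mZ : measurable_fun setT Z)
  (k : R.-pker SY ~> SX) (hk : is_rcd P X Y k)
  (hmono : forall h : SX -> R, measurable_fun setT h ->
      (exists M : R, forall x, (`|h x| <= M)%R) ->
      (forall x y, leX x y -> (h x <= h y)%R) ->
      forall b b', leY b b' ->
        \int[k b]_x (h x)%:E <= \int[k b']_x (h x)%:E)
  (hind : indep_re P Z (fun w => (X w, Y w))) :
  stoch_incr P (prod_le leX leZ) (prod_le leY leZ)
    (fun w => (X w, Z w)) (fun w => (Y w, Z w)).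
Proof.
have mfst : measurable_fun setT (@fst SY SZ) by exact: measurable_fst.
have msnd2 : measurable_fun setT (fun p : (SY * SZ) * SX => p.1.2).
  exact: measurableT_comp measurable_snd measurable_fst.
pose K2 := Kp (kpre k mfst) (kdirac msnd2).
have K2X p A B : measurable A -> measurable B ->
    K2 p (A `*` B) = k p.1 A * \d_(p.2) B.
  move=> mA mB; apply: KpXc => //; exact: measure_ge0.
exists K2; split; last first.
  move=> h mh [M hM] hmon [y z] [y' z'] [/= hyy hzz].
  have mhx x : measurable_fun setT (fun w => h (x, w)).
    exact: measurable_fun_pair2.
  have mh1 w : measurable_fun setT (fun x => h (x, w)).
    exact: measurable_fun_pair1.
  have hMx x w : (`|h (x, w)| <= M)%R by exact: hM.
  have hMx1 w x : (`|h (x, w)| <= M)%R by exact: hM.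
  have Ek (a : SY) (c : SZ) :
      \int[K2 (a, c)]_p (h p)%:E = \int[k a]_x (h (x, c))%:E.
    rewrite (Kp_int (kpre k mfst) (m := \d_c) _ mh hM)//.
    apply: eq_integral => x _; rewrite integral_dirac//; last first.
      exact/measurable_EFinP.
    by rewrite diracT mul1e.
  rewrite !Ek.
  apply: (le_trans (hmono _ (mh1 z) (ex_intro _ M (hMx1 z)) _ _ _ hyy)).
    by move=> x x' hxx; apply: hmon; split.
  pose Py := pr (@prob_kernel _ _ _ _ _ k y').
  apply: (@le_integral _ _ _ Py) => //.
  - exact: (bint Py (mh1 z) (hMx1 z)).
  - exact: (bint Py (mh1 z') (hMx1 z')).
  - by move=> x _; rewrite lee_fin; apply: hmon; split.
move=> C D mC mD.
have mV : measurable_fun setT (fun w => (Y w, Z w)).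
  by apply/measurable_fun_pairP; split.
have mW : measurable_fun setT (fun w => (X w, Z w)).
  by apply/measurable_fun_pairP; split.
apply: (rcd_from_rect mW (mpre mV mD) (F := fun w => K2 (Y w, Z w))) => //.
  move=> C' mC'; apply: measurable_funTS.
  exact: measurableT_comp (measurable_kernel K2 C' mC') mV.
move=> A B mA mB.
apply: (rcd_from_rectD mV (mpre mW (measurableX mA mB))
  (G := fun p => K2 p (A `*` B))) => //.
- exact: measurable_kernel K2 _ (measurableX mA mB).
move=> D1 D2 mD1 mD2.
under eq_integral => w _ do rewrite K2X//=.
have mB' : measurable (D2 `&` B) by exact: measurableI.
have -> : \int[P]_(w in (fun w => (Y w, Z w)) @^-1` (D1 `*` D2))
    (k (Y w) A * \d_(Z w) B) =
    \int[P]_(w in Y @^-1` D1 `&` Z @^-1` (D2 `&` B)) k (Y w) A.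
  rewrite (_ : Y @^-1` D1 `&` Z @^-1` (D2 `&` B) =
      (fun w => (Y w, Z w)) @^-1` (D1 `*` D2) `&` Z @^-1` B); last first.
    by apply/seteqP; split => w /=; tauto.
  rewrite [RHS]integral_mkcondr; apply: eq_integral => w _; rewrite patchE diracE.
  case: ifPn => wB.
    by rewrite (_ : (Z w \in B) = (w \in Z @^-1` B))// wB mule1.
  by rewrite (_ : (Z w \in B) = (w \in Z @^-1` B))// (negbTE wB) mule0.
have hind' : forall A', measurable A' ->
    P (Y @^-1` A' `&` Z @^-1` (D2 `&` B)) =
    P (Z @^-1` (D2 `&` B)) * P (Y @^-1` A').
  move=> A' mA'; have := hind _ _ mB' (measurableX measurableT mA').
  have -> : (fun w => (X w, Y w)) @^-1` (setT `*` A') = Y @^-1` A'.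
    by apply/seteqP; split => w /=; tauto.
  by rewrite setIC.
rewrite (IL mY mZ mB' hind' (f := fun y => k y A)) //; last first.
  exact: measurable_kernel.
rewrite -hk//.
have -> : (fun w => (X w, Z w)) @^-1` (A `*` B) `&`
    (fun w => (Y w, Z w)) @^-1` (D1 `*` D2) =
    Z @^-1` (D2 `&` B) `&` (fun w => (X w, Y w)) @^-1` (A `*` D1).
  by apply/seteqP; split => w /=; tauto.
by rewrite (hind _ _ mB' (measurableX mA mD1)).
Qed.
Local Close Scope ereal_scope.
Unset Implicit Arguments.

Theorem lemma4 (R : realType) (d : measure_display) (Omega : measurableType d)
  (P : probability Omega R)
  (dX : measure_display) (SX : measurableType dX)
  (dY : measure_display) (SY : measurableType dY)
  (dZ : measure_display) (SZ : measurableType dZ)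
  (leX : SX -> SX -> Prop) (leY : SY -> SY -> Prop) (leZ : SZ -> SZ -> Prop)
  (poX : is_partial_order leX) (poY : is_partial_order leY)
  (poZ : is_partial_order leZ)
  (X : Omega -> SX) (Y : Omega -> SY) (Z : Omega -> SZ)
  (mX : measurable_fun setT X) (mY : measurable_fun setT Y)
  (mZ : measurable_fun setT Z)
  (hXY : stoch_incr P leX leY X Y)
  (hind : indep_re P Z (fun w => (X w, Y w))) :
  stoch_incr P (prod_le leX leZ) leY (fun w => (X w, Z w)) Y /\
  stoch_incr P (prod_le leX leZ) (prod_le leY leZ)
    (fun w => (X w, Z w)) (fun w => (Y w, Z w)).
Proof.
case: hXY => k [hk hmono].
case: poX => reflX _ _; case: poZ => reflZ _ _.
split.
- exact: (part1 reflZ mX mY mZ hk hmono hind).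
- exact: (part2 reflX reflZ mX mY mZ hk hmono hind).
Qed.
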